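(* Let $P=\{x_1,\dots,x_n\}\subset\mathbb{R}^d$, let $x$ be a query with nonnegative weights $w_1,\dots,w_n$, and let $Z_h$ be the $(\mathcal{H},\nu)$-hashing-based estimator. Let $\tilde P=\{i\in[n]:p_i>0\}$ and suppose the indices are ordered so that $p_1\ge p_2\ge\dots\ge p_n$. Then $$\mathbb{E}[Z_h]=\frac1n\sum_{i\in\tilde P}w_i\qquad\text{and}\qquad\mathbb{E}[Z_h^2]\le\frac{1}{n^2}\sum_{i\in\tilde P}\frac{w_i^2}{p_i}\left(i+\sum_{j>i}\frac{p_j}{p_i}\right).$$
   Context: Given a family $\mathcal{H}$ of hash functions on $\mathbb{R}^d$ with a probability distribution $\nu$, sample $h\sim\nu$; let $H(x)=\{i\in[n]:h(x_i)=h(x)\}$, let $I(x)$ be a uniformly random element of $H(x)$, or $\perp$ if $H(x)$ is empty, and let $p_i=\Pr_{h\sim\nu}[i\in H(x)]$, with conventions $p_\perp=1$, $w_\perp=0$. The $(\mathcal{H},\nu)$-hashing-based estimator is $Z_h=Z_h(x)=\frac{w_{I(x)}}{p_{I(x)}}\cdot\frac{|H(x)|}{n}$. *)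

(* Defs.v *)
From HB Require Import structures.
From mathcomp Require Import all_boot all_order all_algebra.
From mathcomp Require Import all_classical all_reals all_analysis.
Set Implicit Arguments. Unset Strict Implicit. Unset Printing Implicit Defensive.
Import Order.TTheory GRing.Theory Num.Theory.
Local Open Scope classical_set_scope.
Local Open Scope ring_scope.

(* A random hash function: sample t ~ P (P : probability T R) gives the hash
   function hsh t : 'rV[R]_d -> U (U = buckets).  This is an arbitrary
   distribution nu on the family H = range hsh. *)

Section Defs.
Variables (R : realType) (d n : nat) (T : Type) (U : eqType).
Variables (hsh : T -> 'rV[R]_d -> U) (xs : 'I_n -> 'rV[R]_d) (x : 'rV[R]_d).

Definition collide_set (t : T) : {set 'I_n} := [set i | hsh t (xs i) == hsh t x].

Definition pcoll (mu : set T -> \bar R) (i : 'I_n) : R :=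
  fine (mu [set t | hsh t (xs i) = hsh t x]).
End Defs.

(* Index values extended with bottom (None), with w_bot = 0, p_bot = 1. *)
Definition wopt (R : realType) n (w : 'I_n -> R) (oi : option 'I_n) : R :=
  if oi is Some i then w i else 0.
Definition popt (R : realType) n (p : 'I_n -> R) (oi : option 'I_n) : R :=
  if oi is Some i then p i else 1.

Definition Zval (R : realType) n (w p : 'I_n -> R) (Hs : {set 'I_n})
  (oi : option 'I_n) : R :=
  wopt w oi / popt p oi * (#|Hs|%:R / n%:R).

(* Expectation over I(x), uniform on H(x) = Hs, or I = bottom if Hs is empty *)
Definition Iexp (R : realType) n (g : option 'I_n -> R) (Hs : {set 'I_n}) : R :=
  if Hs == finset.set0 then g None
  else #|Hs|%:R^-1 * \sum_(i in Hs) g (Some i).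

(* Main.v *)
Require Import Defs.
From HB Require Import structures.
From mathcomp Require Import all_boot all_order all_algebra.
From mathcomp Require Import all_classical all_reals all_analysis.
From mathcomp Require Import measurable_realfun.
From mathcomp Require Import ring lra.
Import Order.TTheory GRing.Theory Num.Theory.
Local Open Scope classical_set_scope.
Local Open Scope ring_scope.
Lemma int_lin (R : realType) (dT : measure_display) (T : measurableType dT) (P : probability T R)
  (I : finType) (a : I -> R) (E : I -> set T) :
  (forall k, 0 <= a k) -> (forall k, measurable (E k)) ->
  (\int[P]_t (\sum_k a k * \1_(E k) t)%:E = (\sum_k a k * fine (P (E k)))%:E)%E.
Proof.
move=> a0 mE.
under eq_integral => t _ do rewrite -sumEFin.
rewrite ge0_integral_sum //; last first.
- by move=> k t _; rewrite lee_fin mulr_ge0 // indicE.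
- move=> k; apply/measurable_EFinP; apply: measurable_funM; first exact: measurable_cst.
  exact: measurable_indic.
rewrite -sumEFin; apply: eq_bigr => k _.
rewrite (@integralZl_indic _ _ _ _ _ measurableT (fun _ => E k)) //; last first.
  by rewrite ltNge a0.
rewrite integral_indic // setIT EFinM fineK //.
by apply: fin_num_measure.
Qed.

Theorem lemma3 (R : realType) (d n : nat)
  (dT : measure_display) (T : measurableType dT) (P : probability T R)
  (U : eqType) (hsh : T -> 'rV[R]_d -> U)
  (xs : 'I_n -> 'rV[R]_d) (x : 'rV[R]_d) (w : 'I_n -> R) :
  (forall i, measurable [set t | hsh t (xs i) = hsh t x]) ->
  (forall i, 0 <= w i) ->
  (forall i j : 'I_n, (i <= j)%N -> pcoll hsh xs x P j <= pcoll hsh xs x P i) ->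
  let p := pcoll hsh xs x P in
  let Z := fun t => Zval w p (collide_set hsh xs x t) in
  (\int[P]_t (Iexp (Z t) (collide_set hsh xs x t))%:E
     = (n%:R^-1 * \sum_(i | 0 < p i) w i)%:E)%E /\
  (\int[P]_t (Iexp (fun oi => Z t oi ^+ 2) (collide_set hsh xs x t))%:E
     <= ((n%:R ^+ 2)^-1 * \sum_(i | 0 < p i)
           (w i ^+ 2 / p i) * (i.+1%:R + \sum_(j : 'I_n | (i < j)%N) p j / p i))%:E)%E.
Proof.
move=> mA w0 _ p Z.
set A := fun i : 'I_n => [set t | hsh t (xs i) = hsh t x].
set H := collide_set hsh xs x.
have finA : forall S, measurable S -> P S \is a fin_num.
  by move=> S mS; apply: fin_num_measure.
have p0 : forall i, 0 <= p i by move=> i; apply: fine_ge0; apply: measure_ge0.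
have c0 : forall i, 0 <= w i / p i by move=> i; apply: divr_ge0.
have ind : forall t i, \1_(A i) t = (i \in H t)%:R :> R.
  move=> t i; rewrite indicE /H /collide_set inE.
  case: eqP => h; first by rewrite mem_set.
  by rewrite memNset.
have indI : forall t i j, \1_(A i `&` A j) t = (i \in H t)%:R * (j \in H t)%:R :> R.
  move=> t i j; rewrite indicE /H /collide_set !inE.
  case: eqP => h1; case: eqP => h2 /=; rewrite ?mulr1 ?mulr0 ?mul0r.
  - by rewrite mem_set.
  - by rewrite memNset // => -[].
  - by rewrite memNset // => -[].
  - by rewrite memNset // => -[].
split.
  have pt : forall t, Iexp (Z t) (H t) = \sum_i (n%:R^-1 * (w i / p i)) * \1_(A i) t.
    move=> t; rewrite /Iexp /Z /Zval /= -/(H t).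
    case: ifPn => [/eqP h0|hne].
      rewrite mul0r mul0r big1 // => i _.
      by rewrite ind h0 inE mulr0.
    have hc : #|H t|%:R != 0 :> R by rewrite pnatr_eq0 -lt0n card_gt0.
    rewrite big_mkcond mulr_sumr; apply: eq_bigr => i _.
    rewrite ind /=; case: (i \in H t); rewrite ?mulr1n ?mulr0n; last by rewrite !mulr0.
    by rewrite mulr1 mulrCA mulKf // mulrC.
  under eq_integral => t _ do rewrite pt.
  rewrite int_lin //; last first.
    by move=> k; apply: mulr_ge0 => //; rewrite invr_ge0.
  congr EFin; under eq_bigr => k _ do rewrite -mulrA; rewrite -mulr_sumr; congr (_ * _).
  rewrite [RHS]big_mkcond; apply: eq_bigr => i _.
  rewrite -/(p i).
  have [pgt|ple] := ltP 0 (p i); first by rewrite divfK // gt_eqF.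
  have -> : p i = 0 by apply/eqP; rewrite eq_le ple p0.
  by rewrite invr0 mulr0 mul0r.
have pt : forall t, Iexp (fun oi => Z t oi ^+ 2) (H t) =
   \sum_(k : 'I_n * 'I_n) ((n%:R ^+ 2)^-1 * (w k.1 / p k.1) ^+ 2) * \1_(A k.1 `&` A k.2) t.
  move=> t; rewrite -(pair_bigA _ (fun i j => ((n%:R ^+ 2)^-1 * (w i / p i) ^+ 2) * \1_(A i `&` A j) t)) /=.
  rewrite /Iexp /Z /Zval /= -/(H t).
  case: ifPn => [/eqP h0|hne].
    rewrite mul0r mul0r expr0n /= big1 // => i _.
    by rewrite big1 // => j _; rewrite indI h0 inE mul0r mulr0.
  have hc : #|H t|%:R != 0 :> R by rewrite pnatr_eq0 -lt0n card_gt0.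
  rewrite big_mkcond mulr_sumr; apply: eq_bigr => i _.
  under eq_bigr => j _ do rewrite indI mulrA.
  rewrite -mulr_sumr.
  have -> : \sum_j ((j \in H t)%:R : R) = #|H t|%:R.
    rewrite -sum1_card natr_sum [RHS]big_mkcond; apply: eq_bigr => j _; by case: (j \in H t).
  case: (i \in H t); rewrite ?mulr1n ?mulr0n; last by rewrite !(mulr0, mul0r).
  have hn : n%:R != 0 :> R by rewrite pnatr_eq0 -lt0n (leq_ltn_trans (leq0n i) (ltn_ord i)).
  rewrite mulr1; move: (w i / p i) => c; field; by rewrite hn hc.
under eq_integral => t _ do rewrite pt.
rewrite int_lin //; last first.
  - by move=> k; apply: measurableI; apply: mA.
  - by move=> k; apply: mulr_ge0 => //; rewrite ?invr_ge0 ?exprn_ge0.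
rewrite lee_fin -(pair_bigA _ (fun i j => ((n%:R ^+ 2)^-1 * (w i / p i) ^+ 2) * fine (P (A i `&` A j)))) /=.
rewrite mulr_sumr [X in _ <= X]big_mkcond /=; apply: ler_sum => i _.
rewrite -/(p i).
have [pgt|ple] := ltP 0 (p i); last first.
  have pz : p i = 0 by apply/eqP; rewrite eq_le ple p0.
  rewrite big1 // => j _.
  by rewrite pz invr0 mulr0 expr0n /= mulr0 mul0r.
under eq_bigr => j _ do rewrite -mulrA. rewrite -mulr_sumr; apply: ler_wpM2l; first by rewrite invr_ge0 exprn_ge0.
have qi : forall j, fine (P (A i `&` A j)) <= p i.
  move=> j; apply: fine_le.
  - by apply: finA; apply: measurableI; apply: mA.
  - by apply: finA; apply: mA.
  - by apply: measureIl; apply: mA.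
have qj : forall j, fine (P (A i `&` A j)) <= p j.
  move=> j; apply: fine_le.
  - by apply: finA; apply: measurableI; apply: mA.
  - by apply: finA; apply: mA.
  - by apply: measureIr; apply: mA.
have pne : p i != 0 by rewrite gt_eqF.
rewrite (bigID (fun j : 'I_n => (i < j)%N)) /= addrC mulrDr.
apply: lerD.
  have cnt : \sum_(j : 'I_n | ~~ (i < j)%N) ((w i / p i) ^+ 2 * p i) = ((w i / p i) ^+ 2 * p i) *+ i.+1.
    rewrite (eq_bigl (fun j : 'I_n => (j < i.+1)%N)); last by move=> j; rewrite -ltnNge.
    rewrite -(big_ord_widen _ (fun _ => (w i / p i) ^+ 2 * p i) (ltn_ord i)).
    by rewrite sumr_const card_ord.
  apply: (le_trans (y := \sum_(j : 'I_n | ~~ (i < j)%N) ((w i / p i) ^+ 2 * p i))).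
    apply: ler_sum => j _; apply: ler_wpM2l; [exact: exprn_ge0 | exact: qi].
  rewrite cnt -mulr_natr; rewrite le_eqVlt; apply/orP; left; apply/eqP; field; by rewrite ?pne.
rewrite mulr_sumr; apply: ler_sum => j _.
apply: (le_trans (y := (w i / p i) ^+ 2 * p j)).
  apply: ler_wpM2l; [exact: exprn_ge0 | exact: qj].
rewrite le_eqVlt; apply/orP; left; apply/eqP; field; by rewrite ?pne.
Qed.
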